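(* Assume (V1), (V2), and that $\bar\rho$ satisfies (InBV). Then for every $n\in\mathbb{N}$ and all $t\ge0$, $$\mathrm{TV}[\hat\rho^n(t)]=\mathrm{TV}[\check\rho^n(t)]\le\mathrm{TV}[\bar\rho].$$
   Context: (V1): $v\in C^1([0,\infty))$ strictly decreasing; (V2): $v(0)=v_{\max}\in\mathbb{R}$. $\mathcal{M}_L$: nonnegative compactly supported Radon measures on $\mathbb{R}$ of mass $L>0$. (InBV): $\bar\rho\in\mathcal{M}_L\cap L^\infty(\mathbb{R})\cap BV(\mathbb{R})$. $\bar x_{\min}:=\min\mathrm{supp}\,\bar\rho$. For $n\in\mathbb{N}$: $N_n=2^n$, $\ell_n=2^{-n}L$, $\bar x^n_0=\bar x_{\min}$, $\bar x^n_i=\sup\{x:\int_{\bar x^n_{i-1}}^x\bar\rho<\ell_n\}$; $(x^n_i(t))$ solves $\dot x^n_{N_n}=v_{\max}$, $\dot x^n_i=v(\ell_n/(x^n_{i+1}-x^n_i))$, $x^n_i(0)=\bar x^n_i$; $y^n_i:=\ell_n/(x^n_{i+1}-x^n_i)$. $\hat\rho^n(t,x):=\sum_{i=0}^{N_n-1}y^n_i(t)\chi_{[x^n_i(t),x^n_{i+1}(t))}(x)$ (as a function on $\mathbb{R}$, zero outside $[x^n_0,x^n_{N_n})$), $\check\rho^n(t,z):=\sum_{i=0}^{N_n-1}y^n_i(t)\chi_{[i\ell_n,(i+1)\ell_n)}(z)$. TV denotes total variation on the whole line (for $\check\rho^n$, counting jumps at the endpoints as for $\hat\rho^n$, i.e.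 $y_0+y_{N_n-1}+\sum|y_i-y_{i+1}|$). *)

(* Defs.v *)
From Stdlib Require Import Reals Lra Lia Classical ClassicalEpsilon.
Open Scope R_scope.

(* RInt f a b = Stdlib RiemannInt (signed: RInt f a b = - RInt f b a) whenever
   f is Riemann integrable between a and b; 0 otherwise (never used for the
   BV data of the theorem, which are Riemann integrable on compacts). *)
Definition RInt (f : R -> R) (a b : R) : R :=
  match excluded_middle_informative
          (exists pr : Riemann_integrable f a b, True) with
  | left H => RiemannInt (proj1_sig (constructive_indefinite_description _ H))
  | right _ => 0
  end.

Fixpoint vsum (f : R -> R) (p : nat -> R) (k : nat) : R :=
  match k with
  | O => 0
  | S k' => vsum f p k' + Rabs (f (p (S k')) - f (p k'))
  end.

Definition var_sums (f : R -> R) : R -> Prop :=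
  fun s => exists (p : nat -> R) (k : nat),
    (forall j, (j < k)%nat -> p j < p (S j)) /\ s = vsum f p k.

Lemma var_sums_nonempty (f : R -> R) : exists s, var_sums f s.
Proof.
  exists 0, (fun _ => 0), O. split; [intros j Hj; lia | reflexivity].
Qed.

Definition has_BV (f : R -> R) : Prop := bound (var_sums f).

(* TV f = sup of the variation sums (0 if unbounded; not used in that case) *)
Definition TV (f : R -> R) : R :=
  match excluded_middle_informative (has_BV f) with
  | left H => proj1_sig (completeness (var_sums f) H (var_sums_nonempty f))
  | right _ => 0
  end.

(* (V1): v in C^1([0,oo)) (one-sided derivative at 0) and strictly decreasing there *)
Definition C1_nonneg (v : R -> R) : Prop :=
  exists dv : R -> R,
    (forall x, 0 < x -> derivable_pt_lim v x (dv x)) /\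
    (forall eps, 0 < eps -> exists delta, 0 < delta /\
        forall h, 0 < h < delta -> Rabs ((v h - v 0) / h - dv 0) < eps) /\
    (forall x eps, 0 <= x -> 0 < eps -> exists delta, 0 < delta /\
        forall y, 0 <= y -> Rabs (y - x) < delta -> Rabs (dv y - dv x) < eps).

Definition strictly_decreasing_nonneg (v : R -> R) : Prop :=
  forall a b, 0 <= a -> a < b -> v b < v a.

Definition Nn (n : nat) : nat := Nat.pow 2 n.
Definition elln (L : R) (n : nat) : R := L / 2 ^ n.

Definition in_supp (rho : R -> R) (x : R) : Prop :=
  forall eps, 0 < eps -> 0 < RInt rho (x - eps) (x + eps).

Definition initial_points (rho : R -> R) (ell : R) (N : nat) (xb : nat -> R) : Prop :=
  (in_supp rho (xb O) /\ forall y, in_supp rho y -> xb O <= y) /\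
  (forall i, (1 <= i <= N)%nat ->
     is_lub (fun x => RInt rho (xb (i - 1)%nat) x < ell) (xb i)).

(* classical solution on [0,oo) of the follow-the-leader system,
   with positive gaps (so that y_i = ell/(x_{i+1}-x_i) is defined) *)
Definition FTL_solution (v : R -> R) (vmax ell : R) (N : nat)
    (xb : nat -> R) (x : nat -> R -> R) : Prop :=
  forall i, (i <= N)%nat ->
    x i 0 = xb i /\
    (forall eps, 0 < eps -> exists delta, 0 < delta /\
        forall t, 0 <= t < delta -> Rabs (x i t - x i 0) < eps) /\
    (forall t, 0 < t ->
       derivable_pt_lim (x i) t
         (if Nat.eq_dec i N then vmax else v (ell / (x (S i) t - x i t)))) /\
    ((i < N)%nat -> forall t, 0 <= t -> x i t < x (S i) t).

Definition ychi (a b z : R) : R :=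
  if Rle_dec a z then (if Rlt_dec z b then 1 else 0) else 0.

Definition yi (ell : R) (x : nat -> R -> R) (i : nat) (t : R) : R :=
  ell / (x (S i) t - x i t).

Fixpoint sum_lt (N : nat) (g : nat -> R) : R :=
  match N with O => 0 | S k => sum_lt k g + g k end.

Definition rho_hat (ell : R) (N : nat) (x : nat -> R -> R) (t : R) : R -> R :=
  fun z => sum_lt N (fun i => yi ell x i t * ychi (x i t) (x (S i) t) z).

Definition rho_check (ell : R) (N : nat) (x : nat -> R -> R) (t : R) : R -> R :=
  fun z => sum_lt N (fun i => yi ell x i t * ychi (INR i * ell) (INR (S i) * ell) z).

(* Main.v *)
Require Import Defs.
From Stdlib Require Import Reals Lra Lia Classical ClassicalEpsilon FunctionalExtensionality.
Open Scope R_scope.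

Lemma TV_lub f : has_BV f -> is_lub (var_sums f) (TV f).
Proof. intro H. unfold TV. destruct (excluded_middle_informative (has_BV f)) as [H'|H'].
 - destruct (completeness _ H' (var_sums_nonempty f)) as [m Hm]; exact Hm.
 - contradiction. Qed.

Lemma TV_le f B : (forall s, var_sums f s -> s <= B) -> TV f <= B.
Proof. intro H. assert (Hb: has_BV f) by (exists B; exact H).
 destruct (TV_lub f Hb) as [_ Hl]. apply Hl. exact H. Qed.

Lemma TV_ge f s : has_BV f -> var_sums f s -> s <= TV f.
Proof. intros Hb Hs. destruct (TV_lub f Hb) as [Hu _]. apply Hu; exact Hs. Qed.

Lemma TV_ext f g : (forall s, var_sums f s -> var_sums g s) ->
  (forall s, var_sums g s -> var_sums f s) -> TV f = TV g.
Proof. intros H1 H2. destruct (classic (has_BV f)) as [Hf|Hf].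
 - assert (Hg: has_BV g). { destruct Hf as [B HB]. exists B. intros s Hs. apply HB, H2, Hs. }
   apply (is_lub_u (var_sums f)). apply TV_lub; auto. destruct (TV_lub g Hg) as [Hu Hl]. split.
   + intros s Hs. apply Hu, H1, Hs.
   + intros b Hb. apply Hl. intros s Hs. apply Hb, H2, Hs.
 - assert (Hg: ~ has_BV g). { intros [B HB]. apply Hf. exists B. intros s Hs. apply HB, H1, Hs. }
   unfold TV. destruct (excluded_middle_informative (has_BV f)); [contradiction|].
   destruct (excluded_middle_informative (has_BV g)); [contradiction|]. reflexivity.
Qed.

Lemma vsum_comp f phi p k : vsum (fun z => f (phi z)) p k = vsum f (fun j => phi (p j)) k.
Proof. induction k; simpl; [reflexivity| rewrite IHk; reflexivity]. Qed.

Definition strict (phi : R -> R) := forall a b, a < b -> phi a < phi b.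

Lemma var_sums_comp f phi : strict phi ->
  forall s, var_sums (fun z => f (phi z)) s -> var_sums f s.
Proof. intros Hphi s [p [k [Hp Hs]]]. exists (fun j => phi (p j)), k. split.
 - intros j Hj. apply Hphi, Hp, Hj.
 - rewrite Hs. apply vsum_comp. Qed.

Lemma sum_lt_ext N f g : (forall i, (i < N)%nat -> f i = g i) -> sum_lt N f = sum_lt N g.
Proof. induction N; intros H; simpl; [reflexivity|].
 rewrite IHN by (intros; apply H; lia). rewrite H by lia. reflexivity. Qed.

Lemma strict_le phi a b : strict phi -> a <= b -> phi a <= phi b.
Proof. intros H h. destruct (Rle_lt_or_eq_dec _ _ h) as [h'|h']; [left; apply H, h'| subst; lra]. Qed.

Lemma ychi_mono a b z phi : strict phi -> ychi a b z = ychi (phi a) (phi b) (phi z).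
Proof. intro H. unfold ychi.
 destruct (Rle_dec a z) as [h1|h1]; destruct (Rle_dec (phi a) (phi z)) as [h2|h2].
 - destruct (Rlt_dec z b) as [h3|h3]; destruct (Rlt_dec (phi z) (phi b)) as [h4|h4]; try reflexivity.
   + exfalso. apply h4, H, h3.
   + exfalso. apply Rnot_lt_le in h3. pose proof (strict_le phi _ _ H h3). lra.
 - exfalso. apply h2. apply strict_le; auto.
 - exfalso. apply Rnot_le_lt in h1. pose proof (H _ _ h1). lra.
 - reflexivity.
Qed.

Lemma incr_le (c : nat -> R) N : (forall i, (i < N)%nat -> c i < c (S i)) ->
  forall i j, (i <= j)%nat -> (j <= N)%nat -> c i <= c j.
Proof. intros H i j Hij HjN. induction Hij; [lra|].
 specialize (IHHij ltac:(lia)). specialize (H m ltac:(lia)). lra. Qed.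

Lemma incr_lt (c : nat -> R) N : (forall i, (i < N)%nat -> c i < c (S i)) ->
  forall i j, (i < j)%nat -> (j <= N)%nat -> c i < c j.
Proof. intros H i j Hij HjN. pose proof (H i ltac:(lia)).
 pose proof (incr_le c N H (S i) j ltac:(lia) HjN). lra. Qed.

Fixpoint pw (c c' : nat -> R) (N : nat) (z : R) : R :=
  match N with
  | O => z - c O + c' O
  | S k => if Rle_dec z (c k) then pw c c' k z
           else if Rle_dec z (c (S k)) then c' k + (z - c k) * ((c' (S k) - c' k) / (c (S k) - c k))
           else c' (S k) + (z - c (S k))
  end.

Lemma pw_spec c c' N : (forall i, (i < N)%nat -> c i < c (S i)) ->
  (forall i, (i < N)%nat -> c' i < c' (S i)) ->
  strict (pw c c' N) /\ (forall i, (i <= N)%nat -> pw c c' N (c i) = c' i) /\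
  (forall z, c N <= z -> pw c c' N z = c' N + (z - c N)).
Proof.
 induction N as [|k IH]; intros Hc Hc'.
 - simpl. split; [intros a b h; lra|]. split; [intros i Hi; assert (i = O) by lia; subst; ring|].
   intros; ring.
 - destruct (IH (fun i Hi => Hc i ltac:(lia)) (fun i Hi => Hc' i ltac:(lia))) as [Hs [Hv He]].
   pose proof (Hc k ltac:(lia)) as hk. pose proof (Hc' k ltac:(lia)) as hk'.
   set (r := (c' (S k) - c' k) / (c (S k) - c k)).
   assert (hr : 0 < r) by (unfold r; apply Rdiv_lt_0_compat; lra).
   assert (Hlow : forall u, u <= c k -> pw c c' k u <= c' k).
   { intros u hu. rewrite <- (Hv k ltac:(lia)). apply strict_le; auto. }
   simpl. fold r. split; [|split].
   + intros u w huw.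
     destruct (Rle_dec u (c k)) as [u1|u1]; destruct (Rle_dec w (c k)) as [w1|w1].
     * apply Hs, huw.
     * pose proof (Hlow u u1). destruct (Rle_dec w (c (S k))) as [w2|w2].
       -- assert (0 < (w - c k) * r) by (apply Rmult_lt_0_compat; lra). lra.
       -- lra.
     * lra.
     * destruct (Rle_dec u (c (S k))) as [u2|u2]; destruct (Rle_dec w (c (S k))) as [w2|w2].
       -- apply Rplus_lt_compat_l. apply Rmult_lt_compat_r; lra.
       -- assert ((u - c k) * r <= (c (S k) - c k) * r) by (apply Rmult_le_compat_r; lra).
          assert ((c (S k) - c k) * r = c' (S k) - c' k) by (unfold r; field; lra). lra.
       -- lra.
       -- lra.
   + intros i Hi. destruct (Nat.eq_dec i (S k)) as [->|hne].
     * destruct (Rle_dec (c (S k)) (c k)); [lra|].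
       destruct (Rle_dec (c (S k)) (c (S k))); [|lra]. unfold r; field; lra.
     * assert (c i <= c k) by (apply (incr_le c (S k)); auto; lia).
       destruct (Rle_dec (c i) (c k)); [|lra]. apply Hv. lia.
   + intros z hz. destruct (Rle_dec z (c k)); [lra|].
     destruct (Rle_dec z (c (S k))) as [h|h].
     * assert (z = c (S k)) by lra. subst z. unfold r; field; lra.
     * reflexivity.
Qed.

Definition SF (N:nat) (c g : nat -> R) (z:R) := sum_lt N (fun i => g i * ychi (c i) (c (S i)) z).

Lemma SF_comp N c c' g phi : strict phi -> (forall i, (i <= N)%nat -> phi (c i) = c' i) ->
  forall z, SF N c g z = SF N c' g (phi z).
Proof. intros Hs Hv z. unfold SF. apply sum_lt_ext. intros i Hi.
 rewrite (ychi_mono _ _ _ phi Hs). rewrite !Hv by lia. reflexivity. Qed.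

Lemma TV_SF_eq N c c' g : (forall i, (i < N)%nat -> c i < c (S i)) ->
  (forall i, (i < N)%nat -> c' i < c' (S i)) ->
  TV (SF N c g) = TV (SF N c' g).
Proof. intros Hc Hc'.
 destruct (pw_spec c c' N Hc Hc') as [Hs1 [Hv1 _]].
 destruct (pw_spec c' c N Hc' Hc) as [Hs2 [Hv2 _]].
 apply TV_ext.
 - intros s Hs. apply (var_sums_comp _ _ Hs1).
   assert (E: (fun z => SF N c' g (pw c c' N z)) = SF N c g).
   { extensionality z. symmetry. apply SF_comp; auto. }
   rewrite E. exact Hs.
 - intros s Hs. apply (var_sums_comp _ _ Hs2).
   assert (E: (fun z => SF N c g (pw c' c N z)) = SF N c' g).
   { extensionality z. symmetry. apply SF_comp; auto. }
   rewrite E. exact Hs.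
Qed.

Definition wv (N : nat) (g : nat -> R) (j : nat) : R :=
  match j with O => 0 | S i => if Compare_dec.lt_dec i N then g i else 0 end.

Definition Tsum (w : nat -> R) (j : nat) : R := sum_lt j (fun r => Rabs (w (S r) - w r)).

Lemma sum_lt_zero K f : (forall k, (k < K)%nat -> f k = 0) -> sum_lt K f = 0.
Proof. induction K; intros H; simpl; [reflexivity|]. rewrite IHK by (intros; apply H; lia).
 rewrite H by lia. ring. Qed.

Lemma sum_lt_single K f i : (i < K)%nat -> (forall k, (k < K)%nat -> k <> i -> f k = 0) -> sum_lt K f = f i.
Proof. induction K; intros Hi H; [lia|]. simpl. destruct (Nat.eq_dec i K) as [->|hne].
 - rewrite sum_lt_zero by (intros; apply H; lia). ring.
 - rewrite IHK by (try lia; intros; apply H; lia). rewrite (H K) by lia. ring. Qed.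

Lemma ychi_in a b z : a <= z -> z < b -> ychi a b z = 1.
Proof. intros. unfold ychi. destruct (Rle_dec a z); [|lra]. destruct (Rlt_dec z b); [reflexivity|lra]. Qed.
Lemma ychi_out1 a b z : z < a -> ychi a b z = 0.
Proof. intros. unfold ychi. destruct (Rle_dec a z); [lra|reflexivity]. Qed.
Lemma ychi_out2 a b z : b <= z -> ychi a b z = 0.
Proof. intros. unfold ychi. destruct (Rle_dec a z); [|reflexivity]. destruct (Rlt_dec z b); [lra|reflexivity]. Qed.

Lemma locate (c : nat -> R) N z : z < c O \/ (exists i, (i < N)%nat /\ c i <= z < c (S i)) \/ c N <= z.
Proof. induction N.
 - destruct (Rlt_dec z (c O)); [left; auto| right; right; lra].
 - destruct IHN as [H|[[i [Hi H]]|H]]; [left; auto| right; left; exists i; split; [lia|auto]|].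
   destruct (Rlt_dec z (c (S N))) as [h|h]; [right; left; exists N; split; [lia|lra]| right; right; lra].
Qed.

Definition spec (c : nat -> R) (N : nat) (z : R) (j : nat) : Prop :=
  (j <= S N)%nat /\ (j = O -> z < c O) /\ (forall i, j = S i -> c i <= z) /\ ((j <= N)%nat -> z < c j).

Lemma SF_locate N c g : (forall i, (i < N)%nat -> c i < c (S i)) ->
  forall z, exists j, spec c N z j /\ SF N c g z = wv N g j.
Proof. intros Hc z. unfold SF. destruct (locate c N z) as [H|[[i [Hi H]]|H]].
 - exists O. split.
   { unfold spec. split; [lia|]. split; [auto|]. split; [intros; lia|].
     intros _. exact H. }
   simpl. apply sum_lt_zero. intros k Hk. rewrite ychi_out1; [ring|].
   eapply Rlt_le_trans; [exact H|apply (incr_le c N); auto; lia].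
 - exists (S i). split.
   + unfold spec. split; [lia|]. split; [intros; lia|]. split.
     * intros i' E. injection E as <-. lra.
     * intros _. lra.
   + simpl. destruct (Compare_dec.lt_dec i N); [|lia]. rewrite (sum_lt_single N _ i Hi).
     * rewrite ychi_in by lra. ring.
     * intros k Hk hne. destruct (Nat.lt_ge_cases k i).
       -- rewrite ychi_out2; [ring|]. apply (Rle_trans _ (c i)); [apply (incr_le c N); auto; lia|apply (proj1 H)].
       -- rewrite ychi_out1; [ring|]. apply (Rlt_le_trans _ (c (S i))); [apply (proj2 H)|apply (incr_le c N); auto; lia].
 - exists (S N). split.
   + unfold spec. split; [lia|]. split; [intros; lia|]. split; [|intros; lia].
     intros i E. injection E as <-. exact H.
   + simpl. destruct (Compare_dec.lt_dec N N); [lia|]. apply sum_lt_zero. intros k Hk. rewrite ychi_out2; [ring|].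
     apply (Rle_trans _ (c N)); [apply (incr_le c N); auto; lia|exact H].
Qed.

Lemma spec_mono c N z z' j j' : (forall i, (i < N)%nat -> c i < c (S i)) ->
  z < z' -> spec c N z j -> spec c N z' j' -> (j <= j')%nat.
Proof. intros Hc hz [h1 [h2 [h3 h4]]] [h1' [h2' [h3' h4']]].
 destruct (Nat.le_gt_cases j j') as [?|hlt]; [auto|exfalso].
 destruct j as [|i]; [lia|]. pose proof (h3 i eq_refl). pose proof (h4' ltac:(lia)).
 pose proof (incr_le c N Hc j' i ltac:(lia) ltac:(lia)). lra. Qed.

Lemma Tsum_tele w a b : (a <= b)%nat -> Rabs (w b - w a) <= Tsum w b - Tsum w a.
Proof. intro H. induction H.
 - replace (w a - w a) with 0 by ring. rewrite Rabs_R0. lra.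
 - unfold Tsum at 1. simpl. fold (Tsum w m).
   pose proof (Rabs_triang (w (S m) - w m) (w m - w a)).
   replace (w (S m) - w m + (w m - w a)) with (w (S m) - w a) in H0 by ring. lra. Qed.

Lemma Tsum_nonneg w j : 0 <= Tsum w j.
Proof. induction j; unfold Tsum; simpl; [lra|]. fold (Tsum w j). pose proof (Rabs_pos (w (S j) - w j)). lra. Qed.

Lemma Tsum_mono w a b : (a <= b)%nat -> Tsum w a <= Tsum w b.
Proof. intro H. pose proof (Tsum_tele w a b H). pose proof (Rabs_pos (w b - w a)). lra. Qed.

Lemma SF_vsum N c g : (forall i, (i < N)%nat -> c i < c (S i)) ->
  forall p k, (forall j, (j < k)%nat -> p j < p (S j)) ->
  exists j, spec c N (p k) j /\ vsum (SF N c g) p k <= Tsum (wv N g) j.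
Proof. intros Hc p k. induction k; intros Hp.
 - destruct (SF_locate N c g Hc (p O)) as [j [Hj _]]. exists j. split; auto. simpl. apply Tsum_nonneg.
 - destruct IHk as [j [Hj Hv]]; [intros; apply Hp; lia|].
   destruct (SF_locate N c g Hc (p (S k))) as [j' [Hj' E']].
   destruct (SF_locate N c g Hc (p k)) as [j0 [Hj0 E0]].
   exists j'. split; auto. simpl.
   assert (Hjj : (j <= j')%nat) by (apply (spec_mono c N (p k) (p (S k))); auto).
   (* j0 = j by uniqueness of location *)
   assert (j0 = j).
   { destruct Hj0 as [a1 [a2 [a3 a4]]]. destruct Hj as [b1 [b2 [b3 b4]]].
     destruct (Nat.lt_trichotomy j0 j) as [h|[h|h]]; auto; exfalso.
     - destruct j as [|i]; [lia|]. pose proof (b3 i eq_refl). pose proof (a4 ltac:(lia)).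
       pose proof (incr_le c N Hc j0 i ltac:(lia) ltac:(lia)). lra.
     - destruct j0 as [|i]; [lia|]. pose proof (a3 i eq_refl). pose proof (b4 ltac:(lia)).
       pose proof (incr_le c N Hc j i ltac:(lia) ltac:(lia)). lra. }
   subst j0. rewrite E', E0. pose proof (Tsum_tele (wv N g) j j' Hjj) as Ht.
   lra.
Qed.

Lemma TV_SF_le N c g : (forall i, (i < N)%nat -> c i < c (S i)) ->
  TV (SF N c g) <= Tsum (wv N g) (S N).
Proof. intro Hc. apply TV_le. intros s [p [k [Hp ->]]].
 destruct (SF_vsum N c g Hc p k Hp) as [j [[Hj _] Hv]].
 pose proof (Tsum_mono (wv N g) j (S N) Hj). lra. Qed.

Lemma int_zero_open f c d : c <= d -> (forall z, c < z < d -> f z = 0) -> Riemann_integrable f c d.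
Proof.
 intros hcd Hz eps.
 set (ps := fun z => if Req_EM_T z c then Rabs (f c) else if Req_EM_T z d then Rabs (f d) else 0).
 assert (Had : adapted_couple ps c d (cons c (cons d nil)) (cons 0 nil)).
 { unfold adapted_couple; repeat split.
   - unfold RList.ordered_Rlist; intros; simpl in H; inversion H; [ simpl; assumption | elim (Nat.nle_succ_0 _ H1) ].
   - simpl; unfold Rmin; destruct (Rle_dec c d); [reflexivity|lra].
   - simpl; unfold Rmax; destruct (Rle_dec c d); [reflexivity|lra].
   - unfold constant_D_eq, open_interval; intros; simpl in H; inversion H; [|elim (Nat.nle_succ_0 _ H2)].
     subst. simpl in H0. unfold ps. destruct (Req_EM_T x c); [lra|]. destruct (Req_EM_T x d); [lra|]. reflexivity. }
 exists (mkStepFun (StepFun_P4 c d 0)).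
 exists (mkStepFun (existT _ (cons c (cons d nil)) (existT _ (cons 0 nil) Had))).
 split.
 - intros t Ht. simpl. unfold fct_cte. rewrite Rminus_0_r. unfold ps.
   unfold Rmin, Rmax in Ht. destruct (Rle_dec c d); [|lra].
   destruct (Req_EM_T t c) as [->|h1]; [lra|]. destruct (Req_EM_T t d) as [->|h2]; [lra|].
   rewrite Hz by lra. rewrite Rabs_R0; lra.
 - unfold RiemannInt_SF. simpl. destruct (Rle_dec c d); simpl; rewrite ?Rmult_0_l, ?Rplus_0_r, ?Rabs_R0, ?Ropp_0, ?Rabs_R0;
   destruct eps; simpl; lra.
Qed.

Lemma RInt_val f p q (pr : Riemann_integrable f p q) : RInt f p q = RiemannInt pr.
Proof. unfold RInt. destruct (excluded_middle_informative (exists pr : Riemann_integrable f p q, True)) as [H|H].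
 - apply RiemannInt_P5.
 - exfalso. apply H. exists pr. exact I. Qed.

Lemma int_everywhere f a b : a <= b -> (forall z, z < a \/ b < z -> f z = 0) ->
  Riemann_integrable f a b -> forall p q, Riemann_integrable f p q.
Proof. intros hab Hz Hi.
 assert (Hpq : forall p q, p <= q -> Riemann_integrable f p q).
 { intros p q hpq. set (P := Rmin p a). set (Q := Rmax q b).
   assert (hP : P <= p /\ P <= a) by (unfold P; split; [apply Rmin_l|apply Rmin_r]).
   assert (hQ : q <= Q /\ b <= Q) by (unfold Q; split; [apply Rmax_l|apply Rmax_r]).
   assert (I1 : Riemann_integrable f P a) by (apply int_zero_open; [lra|intros; apply Hz; lra]).
   assert (I2 : Riemann_integrable f b Q) by (apply int_zero_open; [lra|intros; apply Hz; lra]).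
   assert (I3 : Riemann_integrable f P Q) by (apply (RiemannInt_P24 (RiemannInt_P24 I1 Hi) I2)).
   assert (I4 : Riemann_integrable f P q) by (apply (RiemannInt_P22 I3); lra).
   apply (RiemannInt_P23 I4); lra. }
 intros p q. destruct (Rle_dec p q); [apply Hpq; auto|]. apply RiemannInt_P1. apply Hpq. lra.
Qed.

Section Int.
Variable rho : R -> R.
Variable M : R.
Hypothesis Hint : forall p q, Riemann_integrable rho p q.
Hypothesis Hpos : forall z, 0 <= rho z.
Hypothesis HM : forall z, rho z <= M.

Lemma RInt_chasles c x y : RInt rho c y = RInt rho c x + RInt rho x y.
Proof. rewrite (RInt_val _ _ _ (Hint c y)), (RInt_val _ _ _ (Hint c x)), (RInt_val _ _ _ (Hint x y)).
 symmetry. apply RiemannInt_P26. Qed.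

Lemma RInt_bounds x y l u : x <= y -> (forall z, x < z < y -> l <= rho z <= u) ->
  l * (y - x) <= RInt rho x y <= u * (y - x).
Proof. intros h H. rewrite (RInt_val _ _ _ (Hint x y)). apply RiemannInt_const_bound; auto. Qed.

Lemma Fdiff c x y : x <= y -> 0 <= RInt rho c y - RInt rho c x <= M * (y - x).
Proof. intros h. rewrite (RInt_chasles c x y).
 pose proof (RInt_bounds x y 0 M h (fun z _ => conj (Hpos z) (HM z))). lra. Qed.

Lemma lub_int c s ell : 0 < ell -> is_lub (fun x => RInt rho c x < ell) s ->
  RInt rho c s = ell /\ c < s.
Proof. intros hl [Hu Hl].
 assert (HM0 : 0 <= M) by (pose proof (Hpos 0); pose proof (HM 0); lra).
 assert (Hc0 : RInt rho c c = 0).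
 { pose proof (RInt_chasles c c c). lra. }
 assert (A1 : ell <= RInt rho c s).
 { destruct (Rle_dec ell (RInt rho c s)) as [h|h]; [exact h|exfalso].
   set (d := (ell - RInt rho c s) / (2 * (M + 1))).
   assert (hd : 0 < d) by (unfold d; apply Rdiv_lt_0_compat; lra).
   assert (H1 : RInt rho c (s + d) < ell).
   { pose proof (Fdiff c s (s + d) ltac:(lra)).
     assert (E : (M + 1) * d = (ell - RInt rho c s) / 2) by (unfold d; field; lra).
     assert (M * (s + d - s) < ell - RInt rho c s).
     { replace (s + d - s) with d by ring. nra. }
     lra. }
   pose proof (Hu _ H1). lra. }
 assert (A2 : RInt rho c s <= ell).
 { destruct (Rle_dec (RInt rho c s) ell) as [h|h]; [exact h|exfalso].
   set (d := (RInt rho c s - ell) / (2 * (M + 1))).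
   assert (hd : 0 < d) by (unfold d; apply Rdiv_lt_0_compat; lra).
   assert (Hub : is_upper_bound (fun x => RInt rho c x < ell) (s - d)).
   { intros y Hy. destruct (Rle_dec y (s - d)) as [h'|h']; [exact h'|exfalso].
     pose proof (Hu y Hy) as hys. pose proof (Fdiff c y s hys).
     assert (E : (M + 1) * d = (RInt rho c s - ell) / 2) by (unfold d; field; lra).
     assert (M * (s - y) < RInt rho c s - ell) by nra.
     lra. }
   pose proof (Hl _ Hub). lra. }
 split; [lra|].
 destruct (Rlt_dec c s) as [h|h]; [exact h|exfalso].
 pose proof (Hu c ltac:(cbv beta; rewrite Hc0; lra)). assert (c = s) by lra. subst. lra.
Qed.

Lemma near_points c d ell eps : c < d -> RInt rho c d = ell -> 0 < eps ->
  (exists P, c < P < d /\ ell / (d - c) - eps <= rho P) /\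
  (exists Q, c < Q < d /\ rho Q <= ell / (d - c) + eps).
Proof. intros hcd HI he. split.
 - apply NNPP. intro H.
   assert (Hb : forall z, c < z < d -> 0 <= rho z <= ell / (d - c) - eps).
   { intros z hz. split; [auto|]. apply Rnot_lt_le. intro hlt. apply H. exists z. split; [auto|lra]. }
   pose proof (RInt_bounds c d 0 _ ltac:(lra) Hb).
   replace ((ell / (d - c) - eps) * (d - c)) with (ell - eps * (d - c)) in H0 by (field; lra).
   assert (0 < eps * (d - c)) by (apply Rmult_lt_0_compat; lra). lra.
 - apply NNPP. intro H.
   assert (Hb : forall z, c < z < d -> ell / (d - c) + eps <= rho z <= M).
   { intros z hz. split; [|auto]. apply Rnot_lt_le. intro hlt. apply H. exists z. split; [auto|lra]. }
   pose proof (RInt_bounds c d _ M ltac:(lra) Hb).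
   replace ((ell / (d - c) + eps) * (d - c)) with (ell + eps * (d - c)) in H0 by (field; lra).
   assert (0 < eps * (d - c)) by (apply Rmult_lt_0_compat; lra). lra.
Qed.

End Int.

Lemma vsum_Tsum f p k : vsum f p k = Tsum (fun j => f (p j)) k.
Proof. induction k; unfold Tsum; simpl; [reflexivity|]. rewrite IHk. reflexivity. Qed.

Lemma vsum_ext f p q k : (forall j, (j <= k)%nat -> p j = q j) -> vsum f p k = vsum f q k.
Proof. induction k; intros H; simpl; [reflexivity|]. rewrite IHk by (intros; apply H; lia).
 rewrite (H (S k)), (H k) by lia. reflexivity. Qed.

Lemma vsum_S f p k : vsum f p (S k) = vsum f p k + Rabs (f (p (S k)) - f (p k)).
Proof. reflexivity. Qed.

Lemma dedupe f k : forall p, (forall j, (j < k)%nat -> p j <= p (S j)) ->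
  exists q k', (forall j, (j < k')%nat -> q j < q (S j)) /\ q k' = p k /\ vsum f q k' = vsum f p k.
Proof. induction k; intros p Hp.
 - exists p, O. split; [intros; lia|]. split; reflexivity.
 - destruct (IHk p (fun j Hj => Hp j ltac:(lia))) as [q [k' [Hq [Hqk Hv]]]].
   destruct (Rle_lt_or_eq_dec _ _ (Hp k ltac:(lia))) as [hlt|heq].
   + exists (fun j => if Nat.eq_dec j (S k') then p (S k) else q j), (S k'). split; [|split].
     * intros j Hj. destruct (Nat.eq_dec j (S k')); [lia|]. destruct (Nat.eq_dec (S j) (S k')) as [e|e].
       -- injection e as ->. rewrite Hqk. exact hlt.
       -- apply Hq. lia.
     * destruct (Nat.eq_dec (S k') (S k')); [reflexivity|lia].
     * rewrite !vsum_S. destruct (Nat.eq_dec (S k') (S k')); [|lia]. destruct (Nat.eq_dec k' (S k')); [lia|].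
       rewrite Hqk. rewrite <- Hv. f_equal. apply vsum_ext. intros j Hj. destruct (Nat.eq_dec j (S k')); [lia|reflexivity].
   + exists q, k'. split; [auto|]. split; [rewrite Hqk; auto|]. rewrite vsum_S, Hv, heq.
     replace (f (p (S k)) - f (p (S k))) with 0 by ring. rewrite Rabs_R0. ring.
Qed.

Lemma tri3 a b c : Rabs (a - c) <= Rabs (a - b) + Rabs (b - c).
Proof. replace (a - c) with ((a - b) + (b - c)) by ring. apply Rabs_triang. Qed.

Lemma three_pt A l h B z : ((l <= z <= h) \/ (h <= z <= l)) ->
  Rabs (z - A) + Rabs (B - z) <= Rabs (l - A) + Rabs (h - l) + Rabs (B - h).
Proof. intros H. unfold Rabs; repeat destruct Rcase_abs; lra. Qed.

Lemma Tsum_S w K : Tsum w (S K) = Tsum w K + Rabs (w (S K) - w K).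
Proof. reflexivity. Qed.

Lemma Tsum_approx w w' eps K : (forall j, Rabs (w' j - w j) <= eps) ->
  Tsum w K - 2 * eps * INR K <= Tsum w' K.
Proof. intros H. induction K.
 - unfold Tsum; simpl. lra.
 - rewrite !Tsum_S, S_INR.
   pose proof (tri3 (w (S K)) (w' (S K)) (w K)). pose proof (tri3 (w' (S K)) (w' K) (w K)).
   pose proof (H (S K)). pose proof (H K). rewrite Rabs_minus_sym in H2. lra.
Qed.

Lemma even_facts i : Nat.even (2 * i) = true /\ Nat.even (S (2 * i)) = false.
Proof. split; [apply Nat.even_even|]. replace (S (2 * i)) with (2 * i + 1)%nat by lia. apply Nat.even_odd. Qed.

Definition chainp (N : nat) (zL zR : R) (lo hi : nat -> R) (j : nat) : R :=
  match j with
  | O => zL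
  | S j' => if Compare_dec.lt_dec j' (2 * N) then (if Nat.even j' then lo (Nat.div2 j') else hi (Nat.div2 j')) else zR
  end.

Lemma chainp_lo N zL zR lo hi i : (i < N)%nat -> chainp N zL zR lo hi (S (2 * i)) = lo i.
Proof. intro H. unfold chainp. destruct (Compare_dec.lt_dec (2 * i) (2 * N)); [|lia].
 rewrite (proj1 (even_facts i)). rewrite Nat.div2_double. reflexivity. Qed.

Lemma chainp_hi N zL zR lo hi i : (i < N)%nat -> chainp N zL zR lo hi (S (S (2 * i))) = hi i.
Proof. intro H. unfold chainp. destruct (Compare_dec.lt_dec (S (2 * i)) (2 * N)); [|lia].
 rewrite (proj2 (even_facts i)). rewrite Nat.div2_succ_double. reflexivity. Qed.

Lemma chainp_end N zL zR lo hi : chainp N zL zR lo hi (S (2 * N)) = zR.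
Proof. unfold chainp. destruct (Compare_dec.lt_dec (2 * N) (2 * N)); [lia|reflexivity]. Qed.

Lemma chain_bound (f : R -> R) N (X y : nat -> R) eps : 0 < eps ->
  (forall i, (i < N)%nat -> X i < X (S i)) ->
  (forall i, (i < N)%nat -> (exists P, X i < P < X (S i) /\ y i - eps <= f P) /\
                            (exists Q, X i < Q < X (S i) /\ f Q <= y i + eps)) ->
  (exists zL, zL < X O /\ f zL = 0) -> (exists zR, X N < zR /\ f zR = 0) ->
  exists s, var_sums f s /\ Tsum (wv N y) (S N) - 2 * eps * INR (S N) <= s.
Proof.
 intros Heps HX Hpts [zL [hzL fzL]] [zR [hzR fzR]].
 set (Blk := fun i (t : R * (R * R)) => let '(lo, (hi, yp)) := t in
   X i < lo /\ lo <= hi /\ hi < X (S i) /\ ((f lo <= yp <= f hi) \/ (f hi <= yp <= f lo)) /\ Rabs (yp - y i) <= eps).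
 assert (Hex : forall i, exists t, (i < N)%nat -> Blk i t).
 { intro i. destruct (Compare_dec.lt_dec i N) as [Hi|Hi]; [|exists (0,(0,0)); intro; lia].
   destruct (Hpts i Hi) as [[P [hP fP]] [Q [hQ fQ]]].
   assert (Hyp : exists yp, ((f P <= yp <= f Q) \/ (f Q <= yp <= f P)) /\ Rabs (yp - y i) <= eps).
   { destruct (Rle_dec (f Q) (f P)) as [h|h].
     - exists (Rmax (f Q) (Rmin (f P) (y i))). split.
       + right. split; [apply Rmax_l|]. apply Rmax_lub; [auto|apply Rmin_l].
       + unfold Rmax, Rmin. repeat destruct Rle_dec; unfold Rabs; destruct Rcase_abs; lra.
     - exists (f P). split; [left; lra|]. unfold Rabs; destruct Rcase_abs; lra. }
   destruct Hyp as [yp [Hyp1 Hyp2]].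
   destruct (Rle_dec P Q) as [h|h].
   - exists (P, (Q, yp)). intros _. simpl. split; [lra|]. split; [lra|]. split; [lra|]. split; [|lra]. destruct Hyp1; [left|right]; lra.
   - exists (Q, (P, yp)). intros _. simpl. split; [lra|]. split; [lra|]. split; [lra|]. split; [|lra]. destruct Hyp1; [right|left]; lra. }
 set (T := fun i => proj1_sig (constructive_indefinite_description _ (Hex i))).
 assert (HT : forall i, (i < N)%nat -> Blk i (T i)) by (intro i; exact (proj2_sig (constructive_indefinite_description _ (Hex i)))).
 set (lo := fun i => fst (T i)). set (hi := fun i => fst (snd (T i))). set (yp := fun i => snd (snd (T i))).
 assert (HB : forall i, (i < N)%nat -> X i < lo i /\ lo i <= hi i /\ hi i < X (S i) /\
    ((f (lo i) <= yp i <= f (hi i)) \/ (f (hi i) <= yp i <= f (lo i))) /\ Rabs (yp i - y i) <= eps).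
 { intros i Hi. pose proof (HT i Hi). unfold lo, hi, yp. destruct (T i) as [a [b c]]. exact H. }
 clearbody lo hi yp. clear HT T Hex Blk.
 set (p := chainp N zL zR lo hi).
 set (u := fun j => f (p j)).
 set (w' := wv N yp).
 assert (Hu0 : u O = 0) by (unfold u, p; simpl; exact fzL).
 assert (HuE : u (S (2 * N)) = 0) by (unfold u, p; rewrite chainp_end; exact fzR).
 assert (Inv : forall i, (i <= N)%nat -> Tsum w' i + Rabs (u (2 * i)%nat - w' i) <= Tsum u (2 * i)).
 { induction i; intros Hi.
   - unfold Tsum; simpl. rewrite Hu0. unfold w'; simpl. replace (0 - 0) with 0 by ring. rewrite Rabs_R0. lra.
   - specialize (IHi ltac:(lia)). destruct (HB i ltac:(lia)) as [_ [_ [_ [Hh _]]]].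
     replace (2 * S i)%nat with (S (S (2 * i))) by lia.
     assert (E1 : u (S (2 * i)) = f (lo i)) by (unfold u, p; rewrite chainp_lo by lia; reflexivity).
     assert (E2 : u (S (S (2 * i))) = f (hi i)) by (unfold u, p; rewrite chainp_hi by lia; reflexivity).
     assert (E3 : w' (S i) = yp i) by (unfold w', wv; destruct (Compare_dec.lt_dec i N); [reflexivity|lia]).
     rewrite (Tsum_S u (S (2 * i))), (Tsum_S u (2 * i)), (Tsum_S w' i).
     rewrite E1, E2, E3 in *.
     pose proof (three_pt (u (2 * i)%nat) (f (lo i)) (f (hi i)) (f (hi i)) (yp i) Hh).
     replace (f (hi i) - f (hi i)) with 0 in H by ring. rewrite Rabs_R0 in H.
     pose proof (tri3 (yp i) (u (2 * i)%nat) (w' i)).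
     lra. }
 assert (Hfin : Tsum w' (S N) <= Tsum u (S (2 * N))).
 { pose proof (Inv N (le_n N)). rewrite (Tsum_S w' N), (Tsum_S u (2 * N)).
   rewrite HuE. assert (w' (S N) = 0) by (unfold w', wv; destruct (Compare_dec.lt_dec N N); [lia|reflexivity]).
   rewrite H0. pose proof (tri3 0 (u (2 * N)%nat) (w' N)). lra. }
 assert (Happ : Tsum (wv N y) (S N) - 2 * eps * INR (S N) <= Tsum w' (S N)).
 { apply Tsum_approx. intros [|j]; unfold w', wv; [replace (0-0) with 0 by ring; rewrite Rabs_R0; lra|].
   destruct (Compare_dec.lt_dec j N) as [h|h]; [apply (HB j h)|replace (0-0) with 0 by ring; rewrite Rabs_R0; lra]. }
 assert (Hmono : forall j, (j < S (2 * N))%nat -> p j <= p (S j)).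
 { intros j Hj. destruct j as [|j'].
   - unfold p. destruct N as [|N'].
     + simpl. lra.
     + replace 1%nat with (S (2 * 0)) by lia. rewrite chainp_lo by lia. simpl. destruct (HB O ltac:(lia)). lra.
   - destruct (Nat.Even_or_Odd j') as [[i ->]|[i ->]].
     + unfold p. rewrite chainp_lo by lia. rewrite chainp_hi by lia. apply (HB i ltac:(lia)).
     + replace (S (2 * i + 1)) with (S (S (2 * i))) by lia. unfold p. rewrite chainp_hi by lia.
       destruct (Compare_dec.lt_dec (S i) N) as [h|h].
       * replace (S (S (S (2 * i)))) with (S (2 * S i)) by lia. rewrite chainp_lo by lia.
         destruct (HB i ltac:(lia)) as [_ [_ [a _]]]. destruct (HB (S i) h) as [b _]. lra.
       * assert (i = N - 1)%nat by lia.
         replace (S (S (S (2 * i)))) with (S (2 * N)) by lia. rewrite chainp_end.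
         destruct (HB i ltac:(lia)) as [_ [_ [a _]]]. replace (S i) with N in a by lia. lra. }
 destruct (dedupe f (S (2 * N)) p Hmono) as [q [k' [Hq [_ Hv]]]].
 exists (vsum f q k'). split.
 - exists q, k'. split; auto.
 - rewrite Hv, vsum_Tsum. fold u. lra.
Qed.

Definition Rdef (g d : R) : R :=
  if Rlt_dec 0 g then d else if Rlt_dec g 0 then - d else Rabs d.

Lemma abs_dini g t d : derivable_pt_lim g t d ->
  forall eps, 0 < eps -> exists delta, 0 < delta /\
    forall s, t < s < t + delta -> Rabs (g s) <= Rabs (g t) + (Rdef (g t) d + eps) * (s - t).
Proof. intros Hd eps he. destruct (Hd eps he) as [[d1 hd1] Hd1]. simpl in Hd1.
 assert (Key : forall s, t < s < t + d1 -> Rabs (g s - g t - d * (s - t)) <= eps * (s - t)).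
 { intros s hs. set (h := s - t). assert (hh : 0 < h) by (unfold h; lra).
   specialize (Hd1 h ltac:(lra) ltac:(rewrite Rabs_right; unfold h; lra)).
   replace (t + h) with s in Hd1 by (unfold h; ring).
   replace (g s - g t - d * h) with (((g s - g t) / h - d) * h) by (field; lra).
   rewrite Rabs_mult, (Rabs_right h) by lra. apply Rmult_le_compat_r; lra. }
 assert (Hgen : forall s, t < s < t + d1 -> Rabs (g s) <= Rabs (g t + d * (s - t)) + eps * (s - t)).
 { intros s hs. pose proof (Key s hs). pose proof (Rabs_triang (g s - (g t + d * (s - t))) (g t + d * (s - t))). replace (g s - (g t + d * (s - t)) + (g t + d * (s - t))) with (g s) in H0 by ring. 
   replace (g s - (g t + d * (s - t))) with (g s - g t - d * (s - t)) in H0 by ring. lra. }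
 unfold Rdef. destruct (Rlt_dec 0 (g t)) as [h1|h1].
 - exists (Rmin d1 (g t / (Rabs d + 1))). split.
   { apply Rmin_pos; auto. apply Rdiv_lt_0_compat; [lra|pose proof (Rabs_pos d); lra]. }
   intros s hs. assert (hs1 : s - t < d1) by (pose proof (Rmin_l d1 (g t / (Rabs d + 1))); lra).
   assert (hs2 : s - t < g t / (Rabs d + 1)) by (pose proof (Rmin_r d1 (g t / (Rabs d + 1))); lra).
   assert (Hp : (Rabs d + 1) * (s - t) < g t).
   { apply (Rmult_lt_compat_l (Rabs d + 1)) in hs2; [|pose proof (Rabs_pos d); lra].
     replace ((Rabs d + 1) * (g t / (Rabs d + 1))) with (g t) in hs2 by (field; pose proof (Rabs_pos d); lra). lra. }
   assert (0 <= g t + d * (s - t)).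
   { pose proof (Rle_abs (- d)). rewrite Rabs_Ropp in H. nra. }
   pose proof (Hgen s ltac:(lra)). rewrite (Rabs_right (g t + _)) in H0 by lra. rewrite (Rabs_right (g t)) by lra. lra.
 - destruct (Rlt_dec (g t) 0) as [h2|h2].
   + exists (Rmin d1 (- g t / (Rabs d + 1))). split.
     { apply Rmin_pos; auto. apply Rdiv_lt_0_compat; [lra|pose proof (Rabs_pos d); lra]. }
     intros s hs. assert (hs1 : s - t < d1) by (pose proof (Rmin_l d1 (- g t / (Rabs d + 1))); lra).
     assert (hs2 : s - t < - g t / (Rabs d + 1)) by (pose proof (Rmin_r d1 (- g t / (Rabs d + 1))); lra).
     assert (Hp : (Rabs d + 1) * (s - t) < - g t).
     { apply (Rmult_lt_compat_l (Rabs d + 1)) in hs2; [|pose proof (Rabs_pos d); lra].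
       replace ((Rabs d + 1) * (- g t / (Rabs d + 1))) with (- g t) in hs2 by (field; pose proof (Rabs_pos d); lra). lra. }
     assert (g t + d * (s - t) <= 0).
     { pose proof (Rle_abs d). nra. }
     pose proof (Hgen s ltac:(lra)). rewrite (Rabs_left1 (g t + _)) in H0 by lra. rewrite (Rabs_left (g t)) by lra. lra.
   + assert (g t = 0) by lra. exists d1. split; auto. intros s hs. pose proof (Hgen s hs).
     rewrite H in *. rewrite Rplus_0_l, Rabs_mult, (Rabs_right (s - t)) in H0 by lra. rewrite Rabs_R0. lra.
Qed.

Lemma sum_dini (h : nat -> R -> R) (Rr : nat -> R) t K :
  (forall r, (r < K)%nat -> forall eps, 0 < eps -> exists delta, 0 < delta /\
     forall s, t < s < t + delta -> h r s <= h r t + (Rr r + eps) * (s - t)) ->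
  forall eps, 0 < eps -> exists delta, 0 < delta /\
     forall s, t < s < t + delta -> sum_lt K (fun r => h r s) <= sum_lt K (fun r => h r t) + (sum_lt K Rr + eps) * (s - t).
Proof. induction K; intros H eps he.
 - exists 1. split; [lra|]. intros s hs. simpl. nra.
 - destruct (IHK (fun r Hr => H r ltac:(lia)) (eps/2) ltac:(lra)) as [d1 [hd1 H1]].
   destruct (H K ltac:(lia) (eps/2) ltac:(lra)) as [d2 [hd2 H2]].
   exists (Rmin d1 d2). split; [apply Rmin_pos; auto|]. intros s hs.
   pose proof (Rmin_l d1 d2). pose proof (Rmin_r d1 d2).
   specialize (H1 s ltac:(lra)). specialize (H2 s ltac:(lra)). simpl. lra.
Qed.

Lemma mono_from_dini (f : R -> R) :
  (forall t, 0 <= t -> forall eta, 0 < eta -> exists alp, 0 < alp /\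
     forall s, 0 <= s -> Rabs (s - t) < alp -> Rabs (f s - f t) < eta) ->
  (forall t, 0 < t -> forall eps, 0 < eps -> exists delta, 0 < delta /\
     forall s, t < s < t + delta -> f s <= f t + eps * (s - t)) ->
  forall T, 0 <= T -> f T <= f 0.
Proof. intros Hc Hd T hT.
 assert (Heps : forall eps, 0 < eps -> f T <= f 0 + eps + eps * T).
 { intros eps he.
   set (E := fun s => 0 <= s <= T /\ f s <= f 0 + eps + eps * s).
   assert (E0 : E 0) by (unfold E; split; [lra|]; lra).
   assert (Eb : bound E) by (exists T; intros s [[hs1 hs2] _]; lra).
   destruct (completeness E Eb (ex_intro _ 0 E0)) as [c [Hu Hl]].
   assert (hc0 : 0 <= c) by (apply Hu, E0).
   assert (hcT : c <= T) by (apply Hl; intros s [[hs1 hs2] _]; lra).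
   assert (Ec : f c <= f 0 + eps + eps * c).
   { destruct (Rle_lt_or_eq_dec _ _ hc0) as [hcp|hc]; [|subst c; lra].
     apply Rnot_lt_le. intro Hbad.
     set (eta := f c - (f 0 + eps + eps * c)).
     destruct (Hc c hc0 eta ltac:(unfold eta; lra)) as [alp [ha Ha]].
     assert (Hex : exists s, E s /\ c - alp < s).
     { apply NNPP. intro Hn. assert (is_upper_bound E (c - alp)).
       { intros s Hs. apply Rnot_lt_le. intro. apply Hn. exists s. auto. }
       pose proof (Hl _ H). lra. }
     destruct Hex as [s [[hs1 hs2] hs3]]. pose proof (Hu s (conj hs1 hs2)).
     specialize (Ha s ltac:(lra) ltac:(rewrite Rabs_left1; lra)).
     assert (eps * s <= eps * c) by (apply Rmult_le_compat_l; lra).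
     unfold eta in Ha. unfold Rabs in Ha; destruct Rcase_abs in Ha; lra. }
   destruct (Rle_lt_or_eq_dec _ _ hcT) as [hlt|heq]; [exfalso|subst c; exact Ec].
   destruct (Rle_lt_or_eq_dec _ _ hc0) as [hcp|hc].
   - destruct (Hd c hcp eps he) as [del [hdel Hdel]].
     set (s := Rmin (c + del / 2) T).
     assert (hs1 : c < s) by (unfold s; apply Rmin_glb_lt; lra).
     assert (hs2 : s <= T) by apply Rmin_r.
     assert (hs3 : s <= c + del/2) by apply Rmin_l.
     specialize (Hdel s ltac:(lra)).
     assert (E s) by (split; [lra|]; nra).
     pose proof (Hu s H). lra.
   - subst c. destruct (Hc 0 (Rle_refl 0) eps he) as [alp [ha Ha]].
     set (s := Rmin (alp / 2) T).
     assert (hs1 : 0 < s) by (unfold s; apply Rmin_glb_lt; lra).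
     assert (hs2 : s <= T) by apply Rmin_r.
     assert (hs3 : s <= alp/2) by apply Rmin_l.
     specialize (Ha s ltac:(lra) ltac:(rewrite Rminus_0_r, Rabs_right; lra)).
     assert (E s).
     { split; [lra|]. unfold Rabs in Ha; destruct Rcase_abs in Ha; nra. }
     pose proof (Hu s H). lra. }
 apply Rnot_lt_le. intro Hbad.
 set (eps := (f T - f 0) / (2 * (1 + T))).
 assert (he : 0 < eps) by (unfold eps; apply Rdiv_lt_0_compat; lra).
 specialize (Heps eps he).
 assert (eps + eps * T = (f T - f 0) / 2) by (unfold eps; field; lra). lra.
Qed.

Definition rc (f : R -> R) (t : R) := forall eta, 0 < eta -> exists alp, 0 < alp /\
     forall s, 0 <= s -> Rabs (s - t) < alp -> Rabs (f s - f t) < eta.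

Lemma rc_lim f t : rc f t -> limit1_in f (fun s => 0 <= s) (f t) t.
Proof. intros H eta he. destruct (H eta he) as [alp [ha Ha]]. exists alp. split; auto.
 intros s [hs1 hs2]. simpl. unfold Rdist. simpl in hs2. unfold Rdist in hs2. apply Ha; auto. Qed.

Lemma lim_rc f t : limit1_in f (fun s => 0 <= s) (f t) t -> rc f t.
Proof. intros H eta he. destruct (H eta he) as [alp [ha Ha]]. exists alp. split; auto.
 intros s hs1 hs2. specialize (Ha s (conj hs1 hs2)). simpl in Ha. unfold Rdist in Ha. exact Ha. Qed.

Lemma cont_rc f t : continuity_pt f t -> rc f t.
Proof. intros H eta he. destruct (H eta he) as [alp [ha Ha]]. exists alp. split; auto.
 intros s hs1 hs2. destruct (Req_dec s t) as [->|hne].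
 - replace (f t - f t) with 0 by ring. rewrite Rabs_R0. exact he.
 - specialize (Ha s (conj (conj I (not_eq_sym hne)) hs2)). simpl in Ha. unfold Rdist in Ha. exact Ha. Qed.

Lemma rc_minus f g t : rc f t -> rc g t -> rc (fun s => f s - g s) t.
Proof. intros Hf Hg. apply lim_rc. apply limit_minus; apply rc_lim; auto. Qed.

Lemma rc_plus f g t : rc f t -> rc g t -> rc (fun s => f s + g s) t.
Proof. intros Hf Hg. apply lim_rc. apply limit_plus; apply rc_lim; auto. Qed.

Lemma rc_const c t : rc (fun _ => c) t.
Proof. intros eta he. exists 1. split; [lra|]. intros. replace (c - c) with 0 by ring. rewrite Rabs_R0; lra. Qed.

Lemma rc_abs f t : rc f t -> rc (fun s => Rabs (f s)) t.
Proof. intros H eta he. destruct (H eta he) as [alp [ha Ha]]. exists alp. split; auto.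
 intros s hs1 hs2. pose proof (Rabs_triang_inv (f s) (f t)). pose proof (Rabs_triang_inv (f t) (f s)).
 rewrite (Rabs_minus_sym (f t) (f s)) in H1. specialize (Ha s hs1 hs2).
 unfold Rabs at 1. destruct Rcase_abs; lra. Qed.

Lemma rc_div c f t : rc f t -> f t <> 0 -> rc (fun s => c / f s) t.
Proof. intros Hf hne. apply lim_rc. unfold Rdiv.
 apply (limit_mul (fun _ => c) (fun s => / f s)); [apply rc_lim, rc_const|].
 apply limit_inv; auto. apply rc_lim; auto. Qed.

Lemma rc_sum (h : nat -> R -> R) t K : (forall r, (r < K)%nat -> rc (h r) t) -> rc (fun s => sum_lt K (fun r => h r s)) t.
Proof. induction K; intros H.
 - simpl. apply rc_const.
 - simpl. apply (rc_plus (fun s => sum_lt K (fun r => h r s)) (h K)); [apply IHK; intros; apply H; lia|apply H; lia]. Qed.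

Lemma rc_ext f g t : (forall s, f s = g s) -> rc f t -> rc g t.
Proof. intros E H eta he. destruct (H eta he) as [alp [ha Ha]]. exists alp. split; auto.
 intros. rewrite <- !E. auto. Qed.

Section Dyn.
Variable v : R -> R.
Variables vmax ell : R.
Variable N : nat.
Variables (xb : nat -> R) (x : nat -> R -> R).
Hypothesis Hell : 0 < ell.
Hypothesis HN : (1 <= N)%nat.
Hypothesis Hv : strictly_decreasing_nonneg v.
Hypothesis Hv0 : v 0 = vmax.
Hypothesis HF : FTL_solution v vmax ell N xb x.

Definition W (j : nat) (t : R) : R := wv N (fun i => yi ell x i t) j.
Definition Dd (t : R) : R := Tsum (fun j => W j t) (S N).

Lemma gap_pos i t : (i < N)%nat -> 0 <= t -> 0 < x (S i) t - x i t.
Proof. intros Hi ht. destruct (HF i ltac:(lia)) as [_ [_ [_ H]]]. specialize (H Hi t ht). lra. Qed.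

Lemma W_pos i t : (i < N)%nat -> 0 <= t -> 0 < W (S i) t.
Proof. intros Hi ht. unfold W, wv. destruct (Compare_dec.lt_dec i N); [|lia].
 unfold yi. apply Rdiv_lt_0_compat; auto. apply gap_pos; auto. Qed.

Lemma W_nonneg j t : 0 <= t -> 0 <= W j t.
Proof. intros ht. destruct j as [|i]; [unfold W, wv; lra|].
 destruct (Compare_dec.lt_dec i N) as [h|h]; [left; apply W_pos; auto|].
 unfold W, wv. destruct (Compare_dec.lt_dec i N); [lia|lra]. Qed.

Definition xd (i : nat) (t : R) : R := if Nat.eq_dec i N then vmax else v (ell / (x (S i) t - x i t)).

Definition dW (j : nat) (t : R) : R :=
  match j with
  | O => 0
  | S i => if Compare_dec.lt_dec i N then
      ((0 * (x (S i) t - x i t) - (xd (S i) t - xd i t) * ell) / (x (S i) t - x i t)²) else 0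
  end.

Lemma deriv_W j t : 0 < t -> derivable_pt_lim (fun s => W j s) t (dW j t).
Proof. intros ht. destruct j as [|i].
 - unfold W, wv, dW. apply (derivable_pt_lim_const 0 t).
 - unfold dW. destruct (Compare_dec.lt_dec i N) as [h|h].
   + assert (E : (fun s => W (S i) s) = (fct_cte ell / (x (S i) - x i))%F).
     { extensionality s. unfold W, wv. destruct (Compare_dec.lt_dec i N); [|lia]. reflexivity. }
     rewrite E.
     destruct (HF (S i) ltac:(lia)) as [_ [_ [H1 _]]]. destruct (HF i ltac:(lia)) as [_ [_ [H2 _]]].
     specialize (H1 t ht). specialize (H2 t ht).
     assert (Hne : (x (S i) - x i)%F t <> 0) by (unfold minus_fct; pose proof (gap_pos i t h ltac:(lra)); lra).
     pose proof (derivable_pt_lim_div (fct_cte ell) (x (S i) - x i)%F t 0 _ (derivable_pt_lim_const ell t)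
        (derivable_pt_lim_minus _ _ t _ _ H1 H2) Hne) as HD.
     exact HD.
   + assert (E : (fun s => W (S i) s) = fct_cte 0).
     { extensionality s. unfold W, wv. destruct (Compare_dec.lt_dec i N); [lia|]. reflexivity. }
     rewrite E. apply derivable_pt_lim_const.
Qed.

Lemma xd_W i t : (i < N)%nat -> xd i t = v (W (S i) t).
Proof. intro h. unfold xd, W, wv. destruct (Nat.eq_dec i N); [lia|]. destruct (Compare_dec.lt_dec i N); [|lia]. reflexivity. Qed.

Lemma xd_W' i t : (i < N)%nat -> xd (S i) t = v (W (S (S i)) t).
Proof. intro h. unfold xd, W, wv. destruct (Nat.eq_dec (S i) N) as [e|e].
 - destruct (Compare_dec.lt_dec (S i) N); [lia|]. rewrite Hv0. reflexivity.
 - destruct (Compare_dec.lt_dec (S i) N); [|lia]. reflexivity. Qed.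

Lemma dW_form i t : (i < N)%nat -> 0 <= t -> exists c, 0 < c /\ dW (S i) t = c * (v (W (S i) t) - v (W (S (S i)) t)).
Proof. intros h ht. unfold dW. destruct (Compare_dec.lt_dec i N); [|lia].
 rewrite (xd_W i t h), (xd_W' i t h). pose proof (gap_pos i t h ht).
 exists (ell / (x (S i) t - x i t)²). split.
 - apply Rdiv_lt_0_compat; auto. unfold Rsqr. nra.
 - unfold Rsqr. field. lra. Qed.

Lemma dW_sign k t : (1 <= k <= N)%nat -> 0 <= t ->
  (W k t < W (S k) t -> 0 < dW k t) /\ (W (S k) t < W k t -> dW k t < 0) /\ (W (S k) t = W k t -> dW k t = 0).
Proof. intros Hk ht. destruct k as [|i]; [lia|].
 destruct (dW_form i t ltac:(lia) ht) as [c [hc E]]. rewrite E.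
 pose proof (W_nonneg (S i) t ht). pose proof (W_nonneg (S (S i)) t ht).
 split; [|split].
 - intro hl. pose proof (Hv _ _ H hl). nra.
 - intro hl. pose proof (Hv _ _ H0 hl). nra.
 - intro he. rewrite he. ring. Qed.

Definition sg (a : R) : R := if Rlt_dec 0 a then 1 else if Rlt_dec a 0 then -1 else 0.

Lemma key_ineq t : 0 <= t ->
  sum_lt (S N) (fun r => Rdef (W (S r) t - W r t) (dW (S r) t - dW r t)) <= 0.
Proof. intros ht.
 set (g := fun r => W (S r) t - W r t).
 set (sig := fun r => if Req_EM_T (g r) 0 then sg (g (S r)) else sg (g r)).
 assert (HdW0 : dW O t = 0) by reflexivity.
 assert (HdWN : dW (S N) t = 0) by (unfold dW; destruct (Compare_dec.lt_dec N N); [lia|reflexivity]).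
 assert (Hsg : forall a, -1 <= sg a <= 1) by (intro a; unfold sg; repeat destruct Rlt_dec; lra).
 assert (Hsig : forall r, -1 <= sig r <= 1) by (intro r; unfold sig; destruct Req_EM_T; apply Hsg).
 assert (Hsgn : forall k, (1 <= k <= N)%nat -> Rabs (dW k t) = sg (g k) * dW k t).
 { intros k Hk. destruct (dW_sign k t Hk ht) as [a [b c]]. unfold sg, g.
   destruct (Rlt_dec 0 (W (S k) t - W k t)). { specialize (a ltac:(lra)). rewrite Rabs_right; lra. }
   destruct (Rlt_dec (W (S k) t - W k t) 0). { specialize (b ltac:(lra)). rewrite Rabs_left; lra. }
   rewrite c by lra. rewrite Rabs_R0. ring. }
 assert (Hg0 : 0 < g O) by (unfold g; pose proof (W_pos O t ltac:(lia) ht); unfold W at 2, wv; lra).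
 assert (HgN : g N < 0).
 { unfold g. assert (W (S N) t = 0) by (unfold W, wv; destruct (Compare_dec.lt_dec N N); [lia|reflexivity]).
   pose proof (W_pos (N - 1) t ltac:(lia) ht). replace (S (N - 1)) with N in H0 by lia. lra. }
 assert (HR : forall r, (r <= N)%nat -> Rdef (g r) (dW (S r) t - dW r t) = sig r * (dW (S r) t - dW r t)).
 { intros r Hr. unfold Rdef, sig. destruct (Req_EM_T (g r) 0) as [e|e].
   - destruct (Rlt_dec 0 (g r)); [lra|]. destruct (Rlt_dec (g r) 0); [lra|].
     assert (1 <= r)%nat by (destruct r; [lra|lia]).
     assert (r < N)%nat by (destruct (Nat.eq_dec r N); [subst; lra|lia]).
     destruct (dW_sign r t ltac:(lia) ht) as [_ [_ c]]. rewrite c by (unfold g in e; lra).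
     rewrite Rminus_0_r. apply Hsgn. lia.
   - unfold sg. destruct (Rlt_dec 0 (g r)); [ring|]. destruct (Rlt_dec (g r) 0); [ring|lra]. }
 assert (Hd : forall k, (1 <= k <= N)%nat -> dW k t * (sig (k - 1)%nat - sig k) <= 0).
 { intros k Hk. destruct (dW_sign k t Hk ht) as [a [b c]]. pose proof (Hsig (k-1)%nat).
   unfold sig at 2. destruct (Req_EM_T (g k) 0) as [e|e].
   - unfold g in e. rewrite c by lra. lra.
   - unfold sg. destruct (Rlt_dec 0 (g k)) as [h|h].
     + unfold g in h. specialize (a ltac:(lra)). nra.
     + destruct (Rlt_dec (g k) 0) as [h'|h']; [|lra]. unfold g in h'. specialize (b ltac:(lra)). nra. }
 assert (Ind : forall m, (m <= N)%nat -> sum_lt (S m) (fun r => sig r * (dW (S r) t - dW r t)) <= sig m * dW (S m) t).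
 { induction m; intros Hm.
   - cbn [sum_lt]. rewrite HdW0. lra.
   - specialize (IHm ltac:(lia)). change (sum_lt (S (S m)) (fun r => sig r * (dW (S r) t - dW r t)))
       with (sum_lt (S m) (fun r => sig r * (dW (S r) t - dW r t)) + sig (S m) * (dW (S (S m)) t - dW (S m) t)).
     pose proof (Hd (S m) ltac:(lia)). replace (S m - 1)%nat with m in H by lia. nra. }
 rewrite (sum_lt_ext (S N) _ (fun r => sig r * (dW (S r) t - dW r t))).
 - pose proof (Ind N (le_n N)). rewrite HdWN in H. lra.
 - intros r Hr. apply HR. lia.
Qed.

Lemma Dd_dini t : 0 < t -> forall eps, 0 < eps -> exists delta, 0 < delta /\
     forall s, t < s < t + delta -> Dd s <= Dd t + eps * (s - t).
Proof. intros ht eps he.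
 destruct (sum_dini (fun r s => Rabs (W (S r) s - W r s)) (fun r => Rdef (W (S r) t - W r t) (dW (S r) t - dW r t)) t (S N))
   with (eps := eps) as [d [hd Hd]]; auto.
 - intros r Hr eps' he'.
   apply (abs_dini (fun s => W (S r) s - W r s) t (dW (S r) t - dW r t)); auto.
   exact (derivable_pt_lim_minus (fun s => W (S r) s) (fun s => W r s) t _ _ (deriv_W (S r) t ht) (deriv_W r t ht)).
 - exists d. split; auto. intros s hs. specialize (Hd s hs). pose proof (key_ineq t ltac:(lra)).
   unfold Dd, Tsum. assert (0 < s - t) by lra. nra.
Qed.

Lemma x_rc i t : (i <= N)%nat -> 0 <= t -> rc (x i) t.
Proof. intros Hi ht. destruct (Rle_lt_or_eq_dec _ _ ht) as [hp|h0].
 - apply cont_rc. destruct (HF i Hi) as [_ [_ [H _]]].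
   apply derivable_continuous_pt. exists (if Nat.eq_dec i N then vmax else v (ell / (x (S i) t - x i t))). apply H; auto.
 - subst t. destruct (HF i Hi) as [_ [H _ ]]. intros eta he. destruct (H eta he) as [d [hd Hd]].
   exists d. split; auto. intros s hs1 hs2. rewrite Rminus_0_r in hs2. apply Hd. rewrite Rabs_right in hs2 by lra. lra.
Qed.

Lemma Dd_rc t : 0 <= t -> rc Dd t.
Proof. intros ht. unfold Dd, Tsum. apply (rc_sum (fun r s => Rabs (W (S r) s - W r s))).
 intros r Hr. apply (rc_abs (fun s => W (S r) s - W r s)).
 assert (HW : forall j, rc (W j) t).
 { intros [|i].
   - apply (rc_ext (fun _ => 0)); [intros; reflexivity|apply rc_const].
   - destruct (Compare_dec.lt_dec i N) as [h|h].
     + apply (rc_ext (fun s => ell / (x (S i) s - x i s))).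
       { intros s. unfold W, wv. destruct (Compare_dec.lt_dec i N); [reflexivity|lia]. }
       apply (rc_div ell (fun s => x (S i) s - x i s)).
       * apply rc_minus; apply x_rc; auto; lia.
       * pose proof (gap_pos i t h ht). lra.
     + apply (rc_ext (fun _ => 0)); [|apply rc_const]. intros s. unfold W, wv. destruct (Compare_dec.lt_dec i N); [lia|reflexivity]. }
 apply rc_minus; apply HW.
Qed.

Lemma Dd_mono T : 0 <= T -> Dd T <= Dd 0.
Proof. apply mono_from_dini.
 - intros t ht. apply Dd_rc; auto.
 - apply Dd_dini.
Qed.

End Dyn.

Theorem proposition3p8 (v : R -> R) (vmax L : R) (rho : R -> R) :
  (* (V1), (V2) *)
  C1_nonneg v -> strictly_decreasing_nonneg v -> v 0 = vmax ->
  (* (InBV): rho in M_L, L^oo, BV *)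
  0 < L ->
  (forall z, 0 <= rho z) ->
  (exists a b, a <= b /\ (forall z, z < a \/ b < z -> rho z = 0) /\ RInt rho a b = L) ->
  (exists M, forall z, Rabs (rho z) <= M) ->
  has_BV rho ->
  forall (n : nat) (xb : nat -> R) (x : nat -> R -> R),
    initial_points rho (elln L n) (Nn n) xb ->
    FTL_solution v vmax (elln L n) (Nn n) xb x ->
    forall t, 0 <= t ->
      TV (rho_hat (elln L n) (Nn n) x t) = TV (rho_check (elln L n) (Nn n) x t) /\
      TV (rho_check (elln L n) (Nn n) x t) <= TV rho.
Proof.
 intros _ Hv Hv0 HL Hpos [a [b [hab [Hz HI]]]] [M HM] HBV n xb x Hinit HF t ht.
 set (N := Nn n) in *. set (ell := elln L n) in *.
 assert (HN : (1 <= N)%nat).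
 { unfold N, Nn. pose proof (Nat.pow_nonzero 2 n ltac:(lia)). lia. }
 assert (Hell : 0 < ell) by (unfold ell, elln; apply Rdiv_lt_0_compat; auto; apply pow_lt; lra).
 assert (Hc' : forall i, (i < N)%nat -> INR i * ell < INR (S i) * ell) by (intros; rewrite S_INR; lra).
 assert (Hcx : forall s, 0 <= s -> forall i, (i < N)%nat -> x i s < x (S i) s).
 { intros s hs i Hi. destruct (HF i ltac:(lia)) as [_ [_ [_ H]]]. apply H; auto. }
 split.
 - change (TV (SF N (fun i => x i t) (fun i => yi ell x i t)) = TV (SF N (fun i => INR i * ell) (fun i => yi ell x i t))).
   apply TV_SF_eq; auto.
 - change (TV (SF N (fun i => INR i * ell) (fun i => yi ell x i t)) <= TV rho).
   eapply Rle_trans; [apply TV_SF_le; auto|].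
   change (Dd ell N x t <= TV rho).
   eapply Rle_trans; [apply (Dd_mono v vmax ell N xb x Hell HN Hv Hv0 HF t ht)|].
   assert (Hab : Riemann_integrable rho a b).
   { unfold RInt in HI. destruct (excluded_middle_informative (exists pr : Riemann_integrable rho a b, True)) as [H|H].
     - exact (proj1_sig (constructive_indefinite_description _ H)).
     - exfalso. lra. }
   pose proof (int_everywhere rho a b hab Hz Hab) as Hint.
   assert (HM' : forall z, rho z <= M) by (intro z; pose proof (HM z); pose proof (Rle_abs (rho z)); lra).
   assert (Hx0 : forall i, (i <= N)%nat -> x i 0 = xb i) by (intros i Hi; apply (HF i Hi)).
   assert (Hint_i : forall i, (i < N)%nat -> RInt rho (x i 0) (x (S i) 0) = ell).
   { intros i Hi. destruct Hinit as [_ Hl]. specialize (Hl (S i) ltac:(lia)).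
     replace (S i - 1)%nat with i in Hl by lia.
     rewrite (Hx0 i ltac:(lia)), (Hx0 (S i) ltac:(lia)).
     apply (lub_int rho M Hint Hpos HM' (xb i) (xb (S i)) ell Hell Hl). }
   apply Rnot_lt_le. intro Hbad.
   set (eps := (Dd ell N x 0 - TV rho) / (4 * INR (S N))).
   assert (hSN : 0 < INR (S N)) by (apply lt_0_INR; lia).
   assert (he : 0 < eps) by (unfold eps; apply Rdiv_lt_0_compat; lra).
   destruct (chain_bound rho N (fun i => x i 0) (fun i => yi ell x i 0) eps he) as [s [Hs Hsb]].
   + intros i Hi. apply Hcx; auto; lra.
   + intros i Hi. apply (near_points rho M Hint Hpos HM'); auto. apply Hcx; auto; lra.
   + exists (Rmin a (x O 0) - 1). split; [pose proof (Rmin_r a (x O 0)); lra|].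
     apply Hz. left. pose proof (Rmin_l a (x O 0)); lra.
   + exists (Rmax b (x N 0) + 1). split; [pose proof (Rmax_r b (x N 0)); lra|].
     apply Hz. right. pose proof (Rmax_l b (x N 0)); lra.
   + pose proof (TV_ge rho s HBV Hs).
     change (Tsum (wv N (fun i => yi ell x i 0)) (S N)) with (Dd ell N x 0) in Hsb.
     assert (2 * eps * INR (S N) = (Dd ell N x 0 - TV rho) / 2) by (unfold eps; field; lra).
     lra.
Qed.
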